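(* Let $A\in\mathbb{R}^{m\times n}$ be semimonotone ($A^{\dagger}\geq 0$) and let $(U_k,V_k,E_k)_{k=1}^{p}$ be a proper weak regular multisplitting of $A$ such that $R(E_k)\subseteq R(A^{T})$ for each $k=1,\ldots,p$. Let $H=\sum_{k=1}^{p}E_kU_k^{\dagger}V_k$. Then $I-H$ is invertible, and with $B=A(I-H)^{-1}$ and $C=B-A$, the splitting $A=B-C$ is the unique proper splitting of $A$ induced by $H$ (i.e. with $B^{\dagger}C=H$), and it is a convergent proper weak regular splitting.
   Context: $A^{\dagger}$ denotes the Moore–Penrose inverse, $\rho(\cdot)$ the spectral radius, $R(\cdot)$ and $N(\cdot)$ range and null space; inequalities are entrywise. A splitting $A=U-V$ is proper if $R(U)=R(A)$ and $N(U)=N(A)$; it is convergent if $\rho(U^{\dagger}V)<1$; a proper splitting is proper weak regular if $U^{\dagger}\geq 0$ and $U^{\dagger}V\geq 0$. A triplet $(U_k,V_k,E_k)_{k=1}^{p}$ is a proper multisplitting of $A\in\mathbb{R}^{m\times n}$ if each $A=U_k-V_k$ is a proper splitting and each $E_k\geq 0$ is an $n\times n$ diagonal matrix with $\sum_{k=1}^{p}E_k=I_n$; it is a proper weak regular multisplitting if each $A=U_k-V_k$ is a proper weak regular splitting. A splitting $A=B-C$ is said to be induced by $H$ if $B^{\dagger}C=H$. *)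

(* Defs.v *)
From HB Require Import structures.
From mathcomp Require Import all_boot all_order all_algebra.
From mathcomp Require Import reals.
From mathcomp.real_closed Require Import complex.
From Stdlib Require Import ClassicalEpsilon.
Set Implicit Arguments. Unset Strict Implicit. Unset Printing Implicit Defensive.
Import Order.TTheory GRing.Theory Num.Theory.
Local Open Scope ring_scope.

Section Defs.
Variable R : realType.

Definition is_mp_inverse {m n} (A : 'M[R]_(m, n)) (X : 'M[R]_(n, m)) : Prop :=
  [/\ A *m X *m A = A, X *m A *m X = X,
      (A *m X)^T = A *m X & (X *m A)^T = X *m A].

(* A^dagger: the (unique, existing) matrix satisfying the Penrose equations. *)
Definition mpinv {m n} (A : 'M[R]_(m, n)) : 'M[R]_(n, m) :=
  epsilon (inhabits 0) (is_mp_inverse A).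

Definition nonneg_mx {m n} (M : 'M[R]_(m, n)) : Prop :=
  forall i j, 0 <= M i j.

Definition in_range {m n} (U : 'M[R]_(m, n)) (y : 'cV[R]_m) : Prop :=
  exists x : 'cV[R]_n, y = U *m x.
Definition in_null {m n} (U : 'M[R]_(m, n)) (x : 'cV[R]_n) : Prop :=
  U *m x = 0.

Definition proper_splitting {m n} (A U V : 'M[R]_(m, n)) : Prop :=
  [/\ A = U - V,
      (forall y, in_range U y <-> in_range A y) &
      (forall x, in_null U x <-> in_null A x)].

Definition spectral_radius_lt1 {n} (M : 'M[R]_n) : Prop :=
  forall z : R[i], eigenvalue (map_mx (real_complex R) M) z -> `|z| < 1.

Definition convergent_splitting {m n} (U V : 'M[R]_(m, n)) : Prop :=
  spectral_radius_lt1 (mpinv U *m V).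

Definition proper_weak_regular {m n} (A U V : 'M[R]_(m, n)) : Prop :=
  [/\ proper_splitting A U V, nonneg_mx (mpinv U) & nonneg_mx (mpinv U *m V)].

End Defs.

(* Main.v *)
Require Import Defs.
From HB Require Import structures.
From mathcomp Require Import all_boot all_order all_algebra.
From mathcomp Require Import reals.
From mathcomp.real_closed Require Import complex.
From Stdlib Require Import ClassicalEpsilon.
Import Order.TTheory GRing.Theory Num.Theory.
Set Implicit Arguments. Unset Strict Implicit.
Local Open Scope ring_scope.

Lemma spec_lt1 (F : numFieldType) n (H : 'M[F]_n) (x : 'cV[F]_n) (v : 'rV[F]_n) z :
  (forall i j, 0 <= H i j) -> (forall i, 0 <= x i 0) ->
  (forall i, (H *m x) i 0 < x i 0) ->
  v *m H = z *: v -> v != 0 -> `|z| < 1.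
Proof.
move=> H0 x0 Hx ev nz.
pose a i := `|v 0 i|.
have a0 : forall i, 0 <= a i by move=> i; exact: normr_ge0.
have step : forall j, `|z| * a j <= \sum_i a i * H i j.
  move=> j; rewrite /a -normrM.
  have -> : z * v 0 j = (v *m H) 0 j by rewrite ev !mxE.
  rewrite mxE; apply: le_trans (ler_norm_sum _ _ _) _.
  by apply: ler_sum => i _; rewrite normrM (ger0_norm (H0 i j)).
pose S := \sum_j a j * x j 0.
pose T := \sum_i a i * (H *m x) i 0.
have zS : `|z| * S <= T.
  rewrite /S /T mulr_sumr.
  have -> : \sum_i a i * (H *m x) i 0 = \sum_j (\sum_i a i * H i j) * x j 0.
    under eq_bigr do rewrite mxE mulr_sumr.
    rewrite exchange_big /=; apply: eq_bigr => j _.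
    by rewrite mulr_suml; apply: eq_bigr => i _; rewrite mulrA.
  apply: ler_sum => j _; rewrite mulrA; apply: ler_wpM2r => //; exact: step.
have T0 : 0 <= T.
  apply: sumr_ge0 => i _; apply: mulr_ge0 => //; rewrite mxE.
  by apply: sumr_ge0 => j _; exact: mulr_ge0.
have TS : T < S.
  case: (pickP (fun i => v 0 i != 0)) => [i0 Hi0|Hn]; last first.
    case/eqP: nz; apply/rowP => i; rewrite mxE.
    by have := Hn i => /= /negbFE /eqP.
  rewrite /T /S (bigD1 i0) //= [X in _ < X](bigD1 i0) //=.
  apply: ltr_leD.
    by rewrite ltr_pM2l ?normr_gt0.
  by apply: ler_sum => i _; apply: ler_wpM2l => //; exact: ltW.
have S0 : 0 < S by apply: le_lt_trans TS.
by rewrite -(ltr_pM2r S0) mul1r; apply: le_lt_trans TS.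
Qed.

Section Aux.
Variable R : realType.

Lemma mx_ext_col m n (M N : 'M[R]_(m, n)) :
  (forall x : 'cV[R]_n, M *m x = N *m x) -> M = N.
Proof.
move=> HM; apply/matrixP => i j.
have := congr1 (fun X : 'cV[R]_m => X i 0) (HM (col j 1%:M)).
rewrite !mxE.
have e : forall P : 'M[R]_(m,n), \sum_k P i k * col j 1%:M k 0 = P i j.
  move=> P; rewrite (bigD1 j) //= big1 ?addr0 ?mxE ?eqxx ?mulr1 //.
  by move=> k /negbTE nk; rewrite !mxE nk mulr0.
by rewrite !e.
Qed.

Lemma sumsq_eq0 k (w : 'rV[R]_k) : w *m w^T = 0 -> w = 0.
Proof.
move=> /(congr1 (fun X : 'M[R]_1 => X 0 0)); rewrite !mxE => /eqP.
rewrite psumr_eq0 => [/allP Hall|i _]; last by rewrite !mxE -expr2 sqr_ge0.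
apply/rowP => j; rewrite mxE.
have := Hall j (mem_index_enum j); rewrite !mxE /= -expr2 sqrf_eq0.
by move/eqP.
Qed.

Lemma unit_inj n (M : 'M[R]_n) :
  (forall v : 'rV[R]_n, v *m M = 0 -> v = 0) -> M \in unitmx.
Proof.
move=> HM; rewrite -row_free_unit -kermx_eq0; apply/eqP/row_matrixP => i.
by rewrite row0; apply: HM; rewrite -row_mul mulmx_ker row0.
Qed.

Lemma mp_fact m n r (F : 'M[R]_(m, r)) (G : 'M[R]_(r, n)) :
  row_free F^T -> row_free G -> exists X, is_mp_inverse (F *m G) X.
Proof.
move=> frF frG.
have FF : F^T *m F \in unitmx.
  apply: unit_inj => v.
  rewrite mulmxA => h.
  have h2 : (v *m F^T) *m (v *m F^T)^T = 0.
    by rewrite trmx_mul trmxK mulmxA h mul0mx.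
  have := @sumsq_eq0 _ _ h2 => /eqP.
  by rewrite (mulmx_free_eq0 _ frF) => /eqP.
have GG : G *m G^T \in unitmx.
  apply: unit_inj => v; rewrite mulmxA => h.
  have h2 : (v *m G) *m (v *m G)^T = 0.
    by rewrite trmx_mul mulmxA h mul0mx.
  have := @sumsq_eq0 _ _ h2 => /eqP.
  by rewrite (mulmx_free_eq0 _ frG) => /eqP.
exists (G^T *m invmx (G *m G^T) *m invmx (F^T *m F) *m F^T).
set P := invmx (G *m G^T); set Q := invmx (F^T *m F).
have sQ : Q^T = Q by rewrite /Q trmx_inv trmx_mul trmxK.
have sP : P^T = P by rewrite /P trmx_inv trmx_mul trmxK.
have k1 : forall k (M : 'M[R]_(k, r)), M *m Q *m F^T *m F = M.
  by move=> k M; rewrite -!mulmxA /Q mulVmx // mulmx1.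
have k2 : forall k (M : 'M[R]_(k, r)), M *m G *m G^T *m P = M.
  by move=> k M; rewrite -!mulmxA /P (mulmxA G) mulmxV // mulmx1.
split; rewrite !mulmxA ?k2 ?k1 ?k2 //.
- by rewrite !trmx_mul !trmxK sQ !mulmxA.
- by rewrite !trmx_mul !trmxK sP !mulmxA.
Qed.

Lemma mp_exists m n (A : 'M[R]_(m, n)) : exists X, is_mp_inverse A X.
Proof.
have frF : row_free (col_base A)^T.
  by rewrite /row_free mxrank_tr; exact: col_base_full.
have := @mp_fact _ _ _ _ _ frF (row_base_free A).
by rewrite mulmx_base.
Qed.

Lemma mpinvP m n (A : 'M[R]_(m, n)) : is_mp_inverse A (mpinv A).
Proof.
rewrite /mpinv; apply: epsilon_spec; exact: mp_exists.
Qed.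

Lemma fullcol m n (M : 'M[R]_(m, n)) (Y : 'M[R]_(n, m)) :
  (forall x, in_null M x -> x = 0) -> M *m Y *m M = M -> Y *m M = 1%:M.
Proof.
move=> hn hm; apply: mx_ext_col => y; rewrite mul1mx; apply/eqP.
rewrite -subr_eq0; apply/eqP; apply: hn.
by rewrite /in_null mulmxBr !mulmxA hm subrr.
Qed.

Lemma mp_range m n k (M : 'M[R]_(m, n)) (Z : 'M[R]_(m, k)) (Y : 'M[R]_(k, m)) :
  (forall y, in_range M y -> in_range Z y) -> Z *m Y *m Z = Z -> Z *m Y *m M = M.
Proof.
move=> h hZ; apply: mx_ext_col => y.
have [w hw] := h (M *m y) (ex_intro _ y erefl).
by rewrite -mulmxA hw !mulmxA hZ.
Qed.

Lemma mp_kill m k (Z : 'M[R]_(m, k)) (Yz : 'M[R]_(k, m)) (P : 'M[R]_m) :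
  is_mp_inverse Z Yz -> P^T = P -> P *m Z = 0 -> Yz *m P = 0.
Proof.
case=> _ h2 h3 _ hP hPZ.
have -> : Yz = Yz *m Yz^T *m Z^T.
  by rewrite -{1}h2 -mulmxA -h3 trmx_mul mulmxA.
have e : Z^T *m P = 0 by rewrite -hP -trmx_mul hPZ trmx0.
by rewrite -mulmxA e mulmx0.
Qed.

Lemma nn_mul m n k (M : 'M[R]_(m, n)) (N : 'M[R]_(n, k)) :
  nonneg_mx M -> nonneg_mx N -> nonneg_mx (M *m N).
Proof.
move=> hM hN i j; rewrite mxE; apply: sumr_ge0 => l _; exact: mulr_ge0.
Qed.

Lemma nn_sum m n p (F : 'I_p -> 'M[R]_(m, n)) :
  (forall k, nonneg_mx (F k)) -> nonneg_mx (\sum_(k < p) F k).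
Proof. by move=> h i j; rewrite summxE; apply: sumr_ge0 => k _; exact: h. Qed.

Lemma psum_gt0 p (F : 'I_p -> R) k0 :
  (forall k, 0 <= F k) -> 0 < F k0 -> 0 < \sum_(k < p) F k.
Proof.
move=> h0 h; rewrite (bigD1 k0) //=; apply: (lt_le_trans h).
by rewrite lerDl; apply: sumr_ge0.
Qed.
End Aux.

Unset Implicit Arguments. Set Strict Implicit.

Theorem theorem5p5 (R : realType) (m n p : nat) (A : 'M[R]_(m, n))
    (U V : 'I_p -> 'M[R]_(m, n)) (E : 'I_p -> 'M[R]_n) :
  nonneg_mx (mpinv A) ->
  (forall k, proper_weak_regular A (U k) (V k)) ->
  (forall k, is_diag_mx (E k) /\ nonneg_mx (E k)) ->
  \sum_(k < p) E k = 1%:M ->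
  (forall k (y : 'cV[R]_n), in_range (E k) y -> in_range A^T y) ->
  let H := \sum_(k < p) (E k *m mpinv (U k) *m V k) in
  let B := A *m invmx (1%:M - H) in
  let C := B - A in
  [/\ (1%:M - H) \in unitmx,
      proper_splitting A B C /\ mpinv B *m C = H,
      (forall B' C' : 'M[R]_(m, n),
          proper_splitting A B' C' -> mpinv B' *m C' = H -> B' = B /\ C' = C),
      convergent_splitting B C &
      proper_weak_regular A B C].
Proof.
move=> hA hW hE hsum hRE H B C.
set X := mpinv A.
have [a1 a2 a3 a4] := mpinvP A; rewrite -/X in a1 a2 a3 a4.
have XA : X *m A = 1%:M.
  have PAT : X *m A *m A^T = A^T by rewrite -a4 -trmx_mul mulmxA a1.
  apply: mx_ext_col => y; rewrite mul1mx.
  have ey : y = \sum_(k < p) E k *m y by rewrite -mulmx_suml hsum mul1mx.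
  rewrite [in LHS]ey mulmx_sumr [in RHS]ey; apply: eq_bigr => k _.
  have [w hw] := hRE k (E k *m y) (ex_intro _ y erefl).
  by rewrite hw mulmxA PAT.
have nA : forall x, in_null A x -> x = 0.
  by move=> x hx; rewrite -[x]mul1mx -XA -mulmxA hx mulmx0.
pose Y k := mpinv (U k).
have YU : forall k, Y k *m U k = 1%:M.
  move=> k; have [[_ _ hN] _ _] := hW k; have [b1 _ _ _] := mpinvP (U k).
  by apply: fullcol b1 => x /hN; exact: nA.
have YAX : forall k, Y k *m A *m X = Y k.
  move=> k; have [[_ hR _] _ _] := hW k.
  have e : (1%:M - A *m X) *m U k = 0.
    apply: mx_ext_col => y; rewrite mul0mx.
    have [w hw] := (proj1 (hR (U k *m y))) (ex_intro _ y erefl).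
    by rewrite -mulmxA hw mulmxBl mul1mx !mulmxA a1 subrr.
  have := mp_kill (mpinvP (U k)) _ e.
  rewrite raddfB /= trmx1 a3 => /(_ erefl) /eqP.
  by rewrite mulmxBr mulmx1 subr_eq0 mulmxA => /eqP.
have YV : forall k, Y k *m V k = 1%:M - Y k *m A.
  move=> k; have [[hs _ _] _ _] := hW k.
  have -> : V k = U k - A by rewrite hs opprB addrC subrK.
  by rewrite mulmxBr YU.
pose G := \sum_(k < p) E k *m Y k.
have eH : 1%:M - H = G *m A.
  rewrite /H /G mulmx_suml.
  under eq_bigr do rewrite -mulmxA YV mulmxBr mulmx1 mulmxA.
  by rewrite sumrB hsum opprB addrC subrK.
have GAX : G *m A *m X = G.
  by rewrite /G !mulmx_suml; apply: eq_bigr => k _; rewrite -[E k *m Y k *m A]mulmxA -mulmxA YAX.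
have Gnn : nonneg_mx G.
  by apply: nn_sum => k; apply: nn_mul; [exact: (proj2 (hE k)) | case: (hW k)].
have Hnn : nonneg_mx H.
  apply: nn_sum => k; rewrite -mulmxA; apply: nn_mul; first exact: (proj2 (hE k)).
  by case: (hW k).
have Ynn : forall k, nonneg_mx (Y k) by move=> k; case: (hW k).
pose one := const_mx 1 : 'cV[R]_m.
pose x := X *m one.
have x0 : forall i, 0 <= x i 0.
  by move=> i; apply: nn_mul hA _ i 0 => a b; rewrite mxE ler01.
have Gpos : forall i, 0 < (G *m one) i 0.
  move=> i.
  have hs1 : \sum_(k < p) E k i i = 1.
    by have := congr1 (fun M : 'M[R]_n => M i i) hsum; rewrite /= summxE mxE eqxx mulr1n.
  have [k0 Ek0] : exists k, 0 < E k i i.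
    case: (pickP (fun k => 0 < E k i i)) => [k hk|hn]; first by exists k.
    exfalso; have : \sum_(k < p) E k i i = 0.
      apply: big1 => k _; apply/eqP.
      by rewrite eq_le (proj2 (hE k) i i) andbT leNgt hn.
    by rewrite hs1 => /eqP; rewrite oner_eq0.
  have [j Yj] : exists j, 0 < Y k0 i j.
    case: (pickP (fun j => 0 < Y k0 i j)) => [j hj|hn]; first by exists j.
    exfalso; have : (Y k0 *m U k0) i i = 0.
      rewrite mxE; apply: big1 => j _.
      have -> : Y k0 i j = 0.
        by apply/eqP; rewrite eq_le (Ynn k0 i j) andbT leNgt hn.
      by rewrite mul0r.
    by rewrite YU mxE eqxx mulr1n => /eqP; rewrite oner_eq0.
  have Gij : 0 < G i j.
    rewrite /G summxE; apply: (psum_gt0 (k0:=k0)) => [k|].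
      exact: (nn_mul (proj2 (hE k)) (Ynn k)) i j.
    rewrite mxE; apply: (psum_gt0 (k0:=i)) => [l|].
      by apply: mulr_ge0; [exact: (proj2 (hE k0)) | exact: Ynn].
    exact: mulr_gt0.
  rewrite mxE; apply: (psum_gt0 (k0:=j)) => [l|]; rewrite mxE mulr1 //.
have Hx : forall i, (H *m x) i 0 < x i 0.
  have e : (1%:M - H) *m x = G *m one by rewrite eH /x !mulmxA GAX.
  have ee : forall i, ((1%:M - H) *m x) i 0 = x i 0 - (H *m x) i 0.
    by move=> i; rewrite mulmxBl mul1mx !mxE.
  by move=> i; have := Gpos i; rewrite -e ee subr_gt0.
have hU : 1%:M - H \in unitmx.
  apply: unit_inj => v hv; apply/eqP/negPn/negP => nz.
  have ev : v *m H = 1 *: v.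
    by rewrite scale1r; move/eqP: hv; rewrite mulmxBr mulmx1 subr_eq0 => /eqP <-.
  by have := spec_lt1 Hnn x0 Hx ev nz; rewrite normr1 ltxx.
have BA : B *m (1%:M - H) = A by rewrite /B -mulmxA mulVmx // mulmx1.
have nB : forall y, in_null B y -> y = 0.
  move=> y hy.
  have : in_null A (invmx (1%:M - H) *m y) by rewrite /in_null mulmxA.
  move/nA => h; by rewrite -[y]mul1mx -(mulmxV hU) -mulmxA h mulmx0.
have [b1 b2 b3 b4] := mpinvP B.
have YB : mpinv B *m B = 1%:M := fullcol nB b1.
have YA : mpinv B *m A = 1%:M - H by rewrite -BA mulmxA YB mul1mx.
have YC : mpinv B *m C = H by rewrite /C mulmxBr YB YA opprB addrC subrK.
have hPS : proper_splitting A B C.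
  split.
  - by rewrite /C opprB addrC subrK.
  - move=> y; split => [[w ->]|[w ->]].
    + by exists (invmx (1%:M - H) *m w); rewrite /B mulmxA.
    + by exists ((1%:M - H) *m w); rewrite mulmxA BA.
  - move=> y; split => h.
    + by rewrite (nB y h) /in_null mulmx0.
    + by rewrite (nA y h) /in_null mulmx0.
have e1 : (1%:M - A *m X) *m B = 0.
  by rewrite /B mulmxA mulmxBl mul1mx a1 subrr mul0mx.
have := mp_kill (mpinvP B) _ e1; rewrite raddfB /= trmx1 a3 => /(_ erefl) /eqP.
rewrite mulmxBr mulmx1 subr_eq0 => /eqP hYb.
have YG : mpinv B = G by rewrite hYb mulmxA YA eH GAX.
split => //.
- move=> B' C' [hs hR hN] hY'.
  have [c1 _ _ _] := mpinvP B'.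
  have Y'B : mpinv B' *m B' = 1%:M := fullcol (fun x h => nA x (proj1 (hN x) h)) c1.
  have eC : C' = B' - A by rewrite hs opprB addrC subrK.
  have Y'A : mpinv B' *m A = 1%:M - H.
    by move: hY'; rewrite eC mulmxBr Y'B => <-; rewrite opprB addrC subrK.
  have BYA : B' *m mpinv B' *m A = A := mp_range (fun y h => proj2 (hR y) h) c1.
  have e : B' *m (1%:M - H) = A by rewrite -Y'A mulmxA BYA.
  have eB : B' = B by rewrite /B -e -mulmxA mulmxV // mulmx1.
  by split => //; rewrite eC eB.
- rewrite /convergent_splitting YC => z /eigenvalueP [v ev nz].
  have mE : forall k l (M : 'M[R]_(k, l)) i j,
      (map_mx (real_complex R) M) i j = real_complex R (M i j) by move=> k l M i j; rewrite mxE.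
  apply: (spec_lt1 (x := map_mx (real_complex R) x) _ _ _ ev nz).
  + by move=> i j; rewrite mE -(rmorph0 (real_complex R)) lecR; exact: Hnn.
  + by move=> i; rewrite mE -(rmorph0 (real_complex R)) lecR; exact: x0.
  + by move=> i; rewrite -map_mxM !mE ltcR; exact: Hx.
- by rewrite /proper_weak_regular YC YG; split.
Qed.
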